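(* Let $0<\lambda<\frac{5-\sqrt{21}}{2}$ and let $K$ be the attractor of the IFS $f_1(x)=\lambda x$, $f_2(x)=\lambda x+2\lambda$, $f_3(x)=\lambda x+3\lambda-\lambda^2$, $f_4(x)=\lambda x+1-\lambda$. For every $k\ge1$, $f_2\circ f_4(U_{2^k})\subseteq U_{2^{k+1}}$.
   Context: A coding of $x\in K$ is a sequence $(i_n)\in\{1,2,3,4\}^{\mathbb{N}}$ with $x=\lim_{n\to\infty}f_{i_1}\circ\cdots\circ f_{i_n}(0)$. $U_k$ denotes the set of $x\in K$ having exactly $k$ distinct codings. *)

(* Defs.v *)
From Stdlib Require Import Reals Lra Lia List.
Open Scope R_scope.

(* The four maps of the IFS, indexed by digits 1..4 (any other index is
   irrelevant since codings only use digits in {1,2,3,4}). *)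
Definition ifs (lam : R) (i : nat) (x : R) : R :=
  match i with
  | 1%nat => lam * x
  | 2%nat => lam * x + 2 * lam
  | 3%nat => lam * x + 3 * lam - lam ^ 2
  | _ => lam * x + 1 - lam
  end.

(* comp lam c n x = f_{c 0} o f_{c 1} o ... o f_{c (n-1)} (x) *)
Fixpoint comp (lam : R) (c : nat -> nat) (n : nat) (x : R) : R :=
  match n with
  | O => x
  | S m => comp lam c m (ifs lam (c m) x)
  end.

Definition is_digit_seq (c : nat -> nat) : Prop :=
  forall n, (1 <= c n <= 4)%nat.

Definition is_coding (lam : R) (c : nat -> nat) (x : R) : Prop :=
  is_digit_seq c /\ Un_cv (fun n => comp lam c n 0) x.

(* The attractor K: the set of points having a coding. *)
Definition in_K (lam : R) (x : R) : Prop :=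
  exists c, is_coding lam c x.

Definition seq_distinct (c d : nat -> nat) : Prop := exists n, c n <> d n.

Fixpoint pairwise_distinct (l : list (nat -> nat)) : Prop :=
  match l with
  | nil => True
  | c :: l' => Forall (seq_distinct c) l' /\ pairwise_distinct l'
  end.

Definition has_exactly_codings (lam : R) (k : nat) (x : R) : Prop :=
  exists l : list (nat -> nat),
    length l = k /\ pairwise_distinct l /\
    Forall (fun c => is_coding lam c x) l /\
    (forall c, is_coding lam c x -> exists d, In d l /\ forall n, c n = d n).

Definition in_Uk (lam : R) (k : nat) (x : R) : Prop :=
  in_K lam x /\ has_exactly_codings lam k x.

(* Main.v *)
Require Import Defs.
From Stdlib Require Import Reals Lra Lia List.
Open Scope R_scope.

Definition shift (c : nat -> nat) : nat -> nat := fun n => c (S n).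
Definition pre (a b : nat) (c : nat -> nat) : nat -> nat :=
  fun n => match n with O => a | 1%nat => b | S (S m) => c m end.

Lemma lam_facts lam : 0 < lam < (5 - sqrt 21) / 2 ->
  0 < lam /\ lam < 1/4 /\ 4*lam - lam^2 < 1 - lam.
Proof.
  intros [H1 H2].
  assert (Hs : sqrt 21 * sqrt 21 = 21) by (apply sqrt_sqrt; lra).
  assert (Hp : 0 <= sqrt 21) by apply sqrt_pos.
  set (s := sqrt 21) in *.
  assert (s > 4.5) by nra.
  split; [lra|split]; [lra|].
  assert (0 < 5 - 2*lam - s) by lra.
  nra.
Qed.

Lemma ifs_aff lam i w : ifs lam i w = lam * w + ifs lam i 0.
Proof. destruct i as [|[|[|[|i]]]]; simpl; ring. Qed.

Lemma comp_S (lam : R) (c : nat -> nat) (n : nat) (x : R) :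
  Defs.comp lam c (S n) x = ifs lam (c 0%nat) (Defs.comp lam (shift c) n x).
Proof.
  revert x; induction n; intros x.
  - reflexivity.
  - change (Defs.comp lam c (S (S n)) x) with (Defs.comp lam c (S n) (ifs lam (c (S n)) x)).
    rewrite IHn. reflexivity.
Qed.

Lemma cv_aff (u v : nat -> R) a b l l' :
  (forall n, v n = a * u n + b) -> l' = a * l + b -> Un_cv u l -> Un_cv v l'.
Proof.
  intros Hv Hl H eps Heps.
  assert (Ha : 0 < Rabs a + 1) by (pose proof (Rabs_pos a); lra).
  destruct (H (eps / (Rabs a + 1))) as [N HN].
  { apply Rdiv_lt_0_compat; lra. }
  exists N; intros n Hn. specialize (HN n Hn).
  unfold R_dist in *. rewrite Hv, Hl.
  replace (a * u n + b - (a * l + b)) with (a * (u n - l)) by ring.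
  rewrite Rabs_mult.
  apply Rle_lt_trans with (Rabs a * (eps / (Rabs a + 1))).
  - apply Rmult_le_compat_l; [apply Rabs_pos|lra].
  - assert (Hq : 0 < eps / (Rabs a + 1)) by (apply Rdiv_lt_0_compat; lra).
    assert (eps / (Rabs a + 1) * (Rabs a + 1) = eps) by (field; lra).
    nra.
Qed.

Lemma cv_S u l : Un_cv u l -> Un_cv (fun n => u (S n)) l.
Proof.
  intros H eps He. destruct (H eps He) as [N HN]. exists N; intros n Hn.
  apply HN; lia.
Qed.

Lemma cv_SS_inv u l : Un_cv (fun n => u (S (S n))) l -> Un_cv u l.
Proof.
  intros H eps He. destruct (H eps He) as [N HN]. exists (S (S N)); intros n Hn.
  destruct n as [|[|n]]; try lia. apply HN; lia.
Qed.

Section Sec.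
Variable lam : R.
Hypothesis Hl0 : 0 < lam.
Hypothesis Hl1 : lam < 1/4.
Hypothesis Hl2 : 4*lam - lam^2 < 1 - lam.

Lemma ifs_range i x : (1 <= i <= 4)%nat -> 0 <= x <= 1 -> 0 <= ifs lam i x <= 1.
Proof.
  intros Hi Hx. destruct i as [|[|[|[|[|i]]]]]; try lia; simpl; nra.
Qed.

Lemma comp_range c : is_digit_seq c -> forall n x, 0 <= x <= 1 -> 0 <= Defs.comp lam c n x <= 1.
Proof.
  intros Hc n; induction n; intros x Hx; simpl; auto.
  apply IHn, ifs_range; auto.
Qed.

Lemma coding_range c y : is_coding lam c y -> 0 <= y <= 1.
Proof.
  intros [Hd Hcv].
  assert (Hcst : forall r, Un_cv (fun _ => r) r).
  { intros r eps He; exists O; intros; unfold R_dist; rewrite Rminus_diag, Rabs_R0; lra. }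
  split.
  - apply (Rle_cv_lim (Un:=fun _ => 0) (Vn:=fun n => Defs.comp lam c n 0)); auto.
    intros n; apply comp_range; auto; lra.
  - apply (Rle_cv_lim (Un:=fun n => Defs.comp lam c n 0) (Vn:=fun _ => 1)); auto.
    intros n; apply comp_range; auto; lra.
Qed.

Lemma coding_decomp c y : is_coding lam c y ->
  exists z, is_coding lam (shift c) z /\ y = ifs lam (c 0%nat) z.
Proof.
  intros [Hd Hcv].
  exists ((1/lam) * y + (- ifs lam (c 0%nat) 0 / lam)).
  split.
  - split. { intros n; apply Hd. }
    apply (cv_aff (fun n => Defs.comp lam c (S n) 0) _ (1/lam) (- ifs lam (c 0%nat) 0 / lam) y).
    + intros n. rewrite comp_S, (ifs_aff lam (c 0%nat)). field. lra.
    + reflexivity.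
    + apply (cv_S (fun n => Defs.comp lam c n 0)); auto.
  - rewrite (ifs_aff lam (c 0%nat)). field. lra.
Qed.

Lemma coding_prefix c x a b : is_coding lam c x -> (1 <= a <= 4)%nat -> (1 <= b <= 4)%nat ->
  is_coding lam (pre a b c) (ifs lam a (ifs lam b x)).
Proof.
  intros [Hd Hcv] Ha Hb. split.
  - intros [|[|n]]; simpl; auto.
  - apply cv_SS_inv.
    apply (cv_aff (fun n => Defs.comp lam c n 0) _ (lam*lam) (lam * ifs lam b 0 + ifs lam a 0) x); auto.
    + intros n. rewrite !comp_S. change (shift (shift (pre a b c))) with c. unfold shift, pre. rewrite (ifs_aff lam a), (ifs_aff lam b). ring.
    + rewrite (ifs_aff lam a), (ifs_aff lam b). ring.
Qed.
End Sec.

Lemma pd_app l1 l2 : pairwise_distinct l1 -> pairwise_distinct l2 ->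
  (forall c d, In c l1 -> In d l2 -> seq_distinct c d) -> pairwise_distinct (l1 ++ l2).
Proof.
  induction l1 as [|c l1 IH]; simpl; auto.
  intros [Hf Hp] H2 Hx. split.
  - apply Forall_app; split; auto. apply Forall_forall; intros d Hd; apply Hx; auto.
  - apply IH; auto.
Qed.

Lemma pd_map f l : (forall c d, seq_distinct c d -> seq_distinct (f c) (f d)) ->
  pairwise_distinct l -> pairwise_distinct (map f l).
Proof.
  intros Hf; induction l as [|c l IH]; simpl; auto.
  intros [H1 H2]; split; auto.
  apply Forall_map. rewrite Forall_forall in *. intros d Hd; apply Hf; auto.
Qed.

Lemma pre_distinct a b c d : seq_distinct c d -> seq_distinct (pre a b c) (pre a b d).
Proof. intros [n Hn]; exists (S (S n)); simpl; auto. Qed.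

Theorem lemma2p29 (lam : R) (Hlam : 0 < lam < (5 - sqrt 21) / 2) (k : nat)
  (Hk : (1 <= k)%nat) (x : R) :
  in_Uk lam (2 ^ k) x -> in_Uk lam (2 ^ (S k)) (ifs lam 2 (ifs lam 4 x)).
Proof.
  destruct (lam_facts lam Hlam) as [H0 [H1 H2]].
  intros [[c Hc] [l [Hlen [Hpd [Hall Hcov]]]]].
  assert (Hx : 0 <= x <= 1) by (eapply coding_range; eauto).
  assert (Heq : ifs lam 3 (ifs lam 1 x) = ifs lam 2 (ifs lam 4 x)) by (simpl; ring).
  split.
  { exists (pre 2 4 c). apply coding_prefix; auto; lia. }
  exists (map (pre 2 4) l ++ map (pre 3 1) l). split; [|split; [|split]].
  - rewrite length_app, !length_map, Hlen. simpl. lia.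
  - apply pd_app; try (apply pd_map; auto; apply pre_distinct).
    intros c1 d1 H1' H2'. apply in_map_iff in H1' as [c2 [<- _]].
    apply in_map_iff in H2' as [d2 [<- _]]. exists O; simpl; lia.
  - apply Forall_app; split; apply Forall_map; rewrite Forall_forall in *;
      intros d Hd.
    + apply coding_prefix; auto; lia.
    + rewrite <- Heq. apply coding_prefix; auto; lia.
  - intros c' Hc'.
    assert (Hd' := proj1 Hc').
    destruct (coding_decomp lam H0 c' _ Hc') as [z [Hz Hyz]].
    assert (Hzr : 0 <= z <= 1) by (eapply coding_range; eauto).
    destruct (coding_decomp lam H0 _ _ Hz) as [w [Hw Hzw]].
    assert (Hwr : 0 <= w <= 1) by (eapply coding_range; eauto).
    unfold shift in Hzw.
    assert (Ax : 0 <= lam * x <= lam) by (split; nra).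
    assert (Az : 0 <= lam * z <= lam) by (split; nra).
    assert (Aw : 0 <= lam * w <= lam) by (split; nra).
    assert (Al : 0 <= lam * lam <= lam / 4) by (split; nra).
    assert (D0 := Hd' O). assert (D1 := Hd' 1%nat).
    destruct (c' O) as [|[|[|[|[|?]]]]] eqn:E0; try lia; simpl in Hyz;
    destruct (c' 1%nat) as [|[|[|[|[|?]]]]] eqn:E1; try lia; simpl in Hzw;
    try (exfalso; simpl in *; nra).
    +
      assert (Ew : w = x).
      { subst z. assert (E : lam * (lam * (w - x)) = 0) by nra.
        apply Rmult_integral in E as [E|E]; [lra|].
        apply Rmult_integral in E as [E|E]; lra. }
      subst w.
      destruct (Hcov (shift (shift c')) Hw) as [d [Hin Hdn]].
      exists (pre 2 4 d). split.
      * apply in_or_app; left; apply in_map; auto.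
      * intros [|[|n]]; simpl; auto. apply Hdn.
    +
      assert (Ew : w = x).
      { subst z. assert (E : lam * (lam * (w - x)) = 0) by nra.
        apply Rmult_integral in E as [E|E]; [lra|].
        apply Rmult_integral in E as [E|E]; lra. }
      subst w.
      destruct (Hcov (shift (shift c')) Hw) as [d [Hin Hdn]].
      exists (pre 3 1 d). split.
      * apply in_or_app; right; apply in_map; auto.
      * intros [|[|n]]; simpl; auto. apply Hdn.
Qed.
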